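(* Let $\mathcal X$ be finite with $N=|\mathcal X|\ge2$, $c\in(0,1/N]$, $\varepsilon\ge 0$, $l\in\{1,\dots,N-1\}$, and let $K$ be a kernel from $\mathcal X$ to a finite set $\mathcal Y$ with $C(K,\mathcal Q_{\mathcal X}(c))\le\varepsilon$. If $\varepsilon<-\log\big((N-l)c\big)$, then for every $y\in\mathcal Y$ such that $K_{Y|X=x}(y)>0$ for some $x$, the number of $x\in\mathcal X$ with $K_{Y|X=x}(y)=0$ is at most $l-1$.
   Context: A kernel $K$ is a row-stochastic matrix with entries $K_{Y|X=x}(y)$; $(K\circ P_X)(y)=\sum_x K_{Y|X=x}(y)P_X(x)$. For full-support $P_X$ and $(K\circ P_X)(y)>0$, $\ell_{K\times P_X}(X\to y)=\log\frac{\max_{x}K_{Y|X=x}(y)}{(K\circ P_X)(y)}$ (natural log). $\mathcal Q_{\mathcal X}(c)=\{P_X\in\mathcal P(\mathcal X):\min_x P_X(x)\ge c\}$, and $C(K,\mathcal P)=\sup_{P_X\in\mathcal P}\sup_{y:(K\circ P_X)(y)>0}\ell_{K\times P_X}(X\to y)$. *)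

(* Defs.v *)
From HB Require Import structures.
From mathcomp Require Import all_boot all_order all_algebra.
From mathcomp Require Import all_classical all_reals all_analysis.
Set Implicit Arguments. Unset Strict Implicit. Unset Printing Implicit Defensive.
Import Order.TTheory GRing.Theory Num.Theory.
Local Open Scope ring_scope.

(* A kernel from X to Y: K x y = K_{Y|X=x}(y), row-stochastic. *)
Definition is_kernel (R : realType) (X Y : finType) (K : X -> Y -> R) : Prop :=
  (forall x y, 0 <= K x y) /\ (forall x, \sum_(y : Y) K x y = 1).

Definition is_distr (R : realType) (X : finType) (P : X -> R) : Prop :=
  (forall x, 0 <= P x) /\ \sum_(x : X) P x = 1.

Definition Qc (R : realType) (X : finType) (c : R) : set (X -> R) :=
  [set P | is_distr P /\ forall x, c <= P x].

Definition outdist (R : realType) (X Y : finType) (K : X -> Y -> R) (P : X -> R)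
  (y : Y) : R := \sum_(x : X) K x y * P x.

(* max_x K_{Y|X=x}(y) (entries are nonnegative, so 0 is a neutral start) *)
Definition maxcol (R : realType) (X Y : finType) (K : X -> Y -> R) (y : Y) : R :=
  \big[Num.max/0]_(x : X) K x y.

Definition leakage (R : realType) (X Y : finType) (K : X -> Y -> R) (P : X -> R)
  (y : Y) : R := ln (maxcol K y / outdist K P y).

Definition capC (R : realType) (X Y : finType) (K : X -> Y -> R)
  (Pset : set (X -> R)) : \bar R :=
  ereal_sup [set r : \bar R | exists P : X -> R, exists y : Y,
    [/\ Pset P, 0 < outdist K P y & r = (leakage K P y)%:E]]%classic.

(* Main.v *)
Require Import Defs.
From HB Require Import structures.
From mathcomp Require Import all_boot all_order all_algebra.
From mathcomp Require Import all_classical all_reals all_analysis.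
From mathcomp Require Import zify ring lra.
Import Order.TTheory GRing.Theory Num.Theory.
Local Open Scope ring_scope.

Theorem lemma1 (R : realType) (X Y : finType) (c eps : R) (l : nat)
  (K : X -> Y -> R) :
  (2 <= #|X|)%N ->
  0 < c -> c <= #|X|%:R^-1 ->
  0 <= eps ->
  (1 <= l)%N -> (l <= #|X| - 1)%N ->
  is_kernel K ->
  (capC K (Qc c) <= eps%:E)%E ->
  eps < - ln ((#|X| - l)%N%:R * c) ->
  forall y : Y, (exists x : X, 0 < K x y) ->
    (#|[set x : X | K x y == 0%R]| <= l - 1)%N.
Proof.
move=> HN c0 cN eps0 l1 lN [Kge0 Ksum] Hcap Heps y [x0 Kx0].
set Z := [set x : X | K x y == 0%R].
rewrite leqNgt; apply/negP => hz.
have x0Z : x0 \notin Z by rewrite inE gt_eqF.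
have hZN : (#|Z| < #|X|)%N.
  by rewrite -[#|X|]cardsT; apply: proper_card; apply/properP; split;
    [apply: finset.subsetT | exists x0].
have hCZ : #|~: Z| = (#|X| - #|Z|)%N by have := cardsC Z; lia.
set z := #|Z|. set N := #|X|.
have z0 : (0 < z)%N by lia.
set w := (N - z)%N.
have hw : (0 < w)%N by rewrite /w; lia.
have hwl : (w <= N - l)%N by rewrite /w; lia.
have hzw : z%:R + w%:R = N%:R :> R by rewrite -natrD /w; congr (_%:R); lia.
have zR0 : 0 < z%:R :> R by rewrite ltr0n.
have wR0 : 0 < w%:R :> R by rewrite ltr0n.
have NR0 : 0 < N%:R :> R by rewrite ltr0n; lia.
have cN' : c * N%:R <= 1.
  by rewrite -ler_pdivlMr // div1r.
pose P x := if x \in Z then (1 - w%:R * c) / z%:R else c.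
have Pge : forall x, c <= P x.
  move=> x; rewrite /P; case: ifP => // _.
  rewrite ler_pdivlMr //.
  have : c * z%:R + w%:R * c <= 1 by rewrite -hzw mulrDr [c * w%:R]mulrC in cN'.
  by rewrite lerBrDr.
have Pdist : Qc c P.
  split => //; split; first by move=> x; apply: le_trans (Pge x); exact: ltW.
  rewrite (bigID (fun x => x \in Z)) /=.
  have -> : \sum_(i | i \in Z) P i = \sum_(i in Z) ((1 - w%:R * c) / z%:R).
    by apply: eq_bigr => i hi; rewrite /P hi.
  have -> : \sum_(i | i \notin Z) P i = \sum_(i in ~: Z) c.
    rewrite [RHS](eq_bigl (fun i => i \notin Z)); last by move=> i; rewrite inE.
    by apply: eq_bigr => i /negbTE hi; rewrite /P hi.
  rewrite !sumr_const hCZ -/z -/w -/N -(mulr_natr ((1 - _) / _)) -(mulr_natr c).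
  by rewrite divfK ?gt_eqF //; ring.
set M := maxcol K y.
have KM : forall x, K x y <= M by move=> x; exact: le_bigmax.
have M0 : 0 < M by apply: lt_le_trans (KM x0).
set out := outdist K P y.
have out0 : 0 < out.
  rewrite /out /outdist (bigD1 x0) //=.
  apply: lt_le_trans (_ : K x0 y * P x0 <= _).
    by apply: mulr_gt0 => //; apply: lt_le_trans (Pge x0).
  rewrite lerDl; apply: sumr_ge0 => i _; apply: mulr_ge0 => //.
  by apply: le_trans (Pge i); exact: ltW.
have outle : out <= w%:R * c * M.
  rewrite /out /outdist.
  apply: (@le_trans _ _ (\sum_x (if x \in Z then 0 else M * c))).
    apply: ler_sum => x _; rewrite /P; case: ifP => hx.
      by move: hx; rewrite inE => /eqP ->; rewrite mul0r.
    by apply: ler_wpM2r; [exact: ltW | exact: KM].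
  have -> : \sum_x (if x \in Z then 0 else M * c) = \sum_(x in ~: Z) (M * c).
    by rewrite [RHS]big_mkcond; apply: eq_bigr => x _; rewrite finset.in_setC; case: (x \in Z).
  rewrite sumr_const hCZ -/z -/w -/N -(mulr_natl (M * c)).
  by rewrite (_ : w%:R * (M * c) = w%:R * c * M) //; ring.
have Hleak : - ln ((N - l)%N%:R * c) <= leakage K P y.
  have p1 : 0 < w%:R * c by apply: mulr_gt0.
  have hNl : (0 < N - l)%N by rewrite subn_gt0; move: lN HN; rewrite /N; case: #|X| => [|n] //; rewrite subn1 /= ltnS.
  have p2 : 0 < (N - l)%N%:R * c by apply: mulr_gt0; [rewrite ltr0n|].
  have h1 : ln (w%:R * c) <= ln ((N - l)%N%:R * c).
    rewrite ler_ln ?posrE //; apply: ler_wpM2r; [exact: ltW|by rewrite ler_nat].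
  have h2 : (w%:R * c)^-1 <= M / out.
    have -> : (w%:R * c)^-1 = M / (w%:R * c * M) by rewrite [in RHS]invfM mulrCA mulfV ?mulr1 // gt_eqF.
    apply: ler_wpM2l; first exact: ltW.
    by rewrite lef_pV2 ?posrE //; apply: mulr_gt0.
  have h3 : ln ((w%:R * c)^-1) <= leakage K P y.
    rewrite /leakage ler_ln ?posrE //; [by rewrite invr_gt0|].
    by apply: divr_gt0.
  rewrite lnV ?posrE // in h3; apply: le_trans h3; by rewrite lerN2.
have : ((leakage K P y)%:E <= eps%:E)%E.
  apply: le_trans Hcap; apply: ereal_sup_ubound; exists P, y; split => //.
rewrite lee_fin => h; have := lt_le_trans Heps (le_trans Hleak h); by rewrite ltxx.
Qed.
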